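(* Let $\mathfrak g$ be the free nilpotent real Lie algebra of rank $r\ge2$ and step $s\ge2$, of dimension $n$, with a Hall basis $X_1,\dots,X_n$. For every $\beta\in\mathbb{N}^n$, $i\in\{1,\dots,n\}$ and $q\in\{1,\dots,r\}$, $$[[X_i,X_q],X_\beta]=\sum_{\ell\in\mathcal A_{\beta,q}}\frac{\beta!}{(\beta-I(\ell))!\,I(\ell)!}\,[X_i,X_{\beta-I(\ell)+e_\ell}],$$ where $\mathcal A_{\beta,q}=\{\ell\in\{1,\dots,n\}: q\prec\ell,\ I(\ell)\le\beta\}$.
   Context: Multi-indices $\mathbb{N}^n$: $|\alpha|=\sum\alpha_i$, $\alpha!=\prod\alpha_i!$, $\alpha\le\beta$ componentwise, $e_k$ the $k$-th unit vector. Hall basis: take a basis $X_1,\dots,X_r$ of the first layer $\mathfrak g_1$ (degree 1); inductively, the basis elements of degree $d$ are the brackets $[X_i,X_j]$ of previously constructed elements with $i>j$, $d(i)+d(j)=d$, and such that, if $X_i$ (of degree $\ge2$) was constructed as $[X_h,X_k]$, then $k\le j$; they are listed after all elements of lower degree. To each index $\ell$ attach a string: $(\ell)$ if $\ell\le r$; if $X_\ell$ was constructed as $[X_a,X_b]$, the string of $a$ followed by $b$. With string $(\ell_0,\dots,\ell_h)$ one has $X_\ell=[\cdots[[X_{\ell_0},X_{\ell_1}],X_{\ell_2}],\dots,X_{\ell_h}]$. Define $I(\ell)\in\mathbb{N}^n$ by $I(\ell)_j=\#\{1\le p\le h:\ell_p=j\}$, and write $j\prec\ell$ if the string of $j$ is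 an initial segment of the string of $\ell$ (for $q\le r$, $q\prec\ell$ iff $\ell_0=q$). For $Y\in\mathfrak g$ and $\alpha\in\mathbb{N}^n$, $[Y,X_\alpha]$ denotes the left-nested bracket $[\cdots[[Y,X_1],X_1],\dots,X_n]$ where $X_1$ appears $\alpha_1$ times, then $X_2$ appears $\alpha_2$ times, ..., then $X_n$ appears $\alpha_n$ times; $[Y,X_0]=Y$. *)

(* Defs.v *)
From HB Require Import structures.
From mathcomp Require Import all_boot all_order all_algebra.
From mathcomp Require Import reals.
Set Implicit Arguments. Unset Strict Implicit. Unset Printing Implicit Defensive.
Import Order.TTheory GRing.Theory Num.Theory.
Local Open Scope ring_scope.

Definition lie_bracket (R : pzRingType) (L : lmodType R) (br : L -> L -> L) : Prop :=
  [/\ forall (c : R) (x y z : L), br (c *: x + y) z = c *: br x z + br y z,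
      forall (c : R) (x y z : L), br x (c *: y + z) = c *: br x y + br x z,
      forall x : L, br x x = 0 &
      forall x y z : L, br x (br y z) + br y (br z x) + br z (br x y) = 0].

Definition nilpotent_step (R : pzRingType) (L : lmodType R) (br : L -> L -> L)
  (s : nat) : Prop :=
  forall (x : L) (zs : seq L), size zs = s -> foldl br x zs = 0.

Definition lie_hom (R : pzRingType) (L M : lmodType R) (brL : L -> L -> L)
  (brM : M -> M -> M) (phi : L -> M) : Prop :=
  (forall (c : R) (x y : L), phi (c *: x + y) = c *: phi x + phi y) /\
  (forall x y : L, phi (brL x y) = brM (phi x) (phi y)).

Definition free_nilpotent (R : pzRingType) (r s : nat) (L : lmodType R)
  (br : L -> L -> L) (Y : 'I_r -> L) : Prop :=
  [/\ lie_bracket br, nilpotent_step br s &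
      forall (M : lmodType R) (brM : M -> M -> M),
        lie_bracket brM -> nilpotent_step brM s ->
        forall f : 'I_r -> M,
          exists phi : L -> M,
            [/\ lie_hom br brM phi, (forall i, phi (Y i) = f i) &
                forall psi : L -> M, lie_hom br brM psi ->
                  (forall i, psi (Y i) = f i) -> forall x, psi x = phi x]].

(* ---------- Hall basis (indices are 0-based: paper's X_{l+1} is our l) ------ *)

(* Combinatorial data of a Hall basis of the free nilpotent Lie algebra of rank r
   and step s, listed as X_0, ..., X_{n-1}:
   - indices l < r are the degree-1 elements (basis of the first layer);
   - an index l >= r is the bracket [X_(a l), X_(b l)];
   - deg is the degree, nondecreasing along the list;
   - the elements of degree >= 2 are exactly (and each once) the brackets
     [X_i, X_j] with i > j, deg i + deg j <= s and, if X_i = [X_h, X_k], k <= j.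
   (a l, b l are irrelevant for l < r.) *)
Definition is_hall (r s n : nat) (deg : 'I_n -> nat) (a b : 'I_n -> 'I_n) : Prop :=
  [/\ (r <= n)%N,
      forall l : 'I_n, (l < r)%N -> deg l = 1%N &
      forall l : 'I_n, (r <= l)%N ->
        [/\ (b l < a l)%N, deg l = (deg (a l) + deg (b l))%N &
            ((r <= a l)%N -> (b (a l) <= b l)%N)]] /\
  [/\ forall l m : 'I_n, (l <= m)%N -> (deg l <= deg m)%N,
      forall l : 'I_n, (deg l <= s)%N,
      forall l m : 'I_n, (r <= l)%N -> (r <= m)%N -> a l = a m -> b l = b m -> l = m &
      forall i j : 'I_n, (j < i)%N -> (deg i + deg j <= s)%N ->
        ((r <= i)%N -> (b i <= j)%N) ->
        exists l : 'I_n, [/\ (r <= l)%N, a l = i & b l = j]].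

(* the string (l_0, ..., l_h) attached to the index l (fuel-driven recursion;
   fuel n suffices since a l < l) *)
Fixpoint hall_string_fuel (r n : nat) (a b : 'I_n -> 'I_n) (fuel : nat) (l : 'I_n)
  : seq 'I_n :=
  match fuel with
  | 0 => [:: l]
  | k.+1 => if (l < r)%N then [:: l]
            else rcons (hall_string_fuel r a b k (a l)) (b l)
  end.

Definition hall_string (r n : nat) (a b : 'I_n -> 'I_n) (l : 'I_n) : seq 'I_n :=
  hall_string_fuel r a b n l.

Definition hall_I (r n : nat) (a b : 'I_n -> 'I_n) (l : 'I_n) : 'I_n -> nat :=
  fun j => count_mem j (behead (hall_string r a b l)).

Definition hall_prec (r n : nat) (a b : 'I_n -> 'I_n) (j l : 'I_n) : bool :=
  prefix (hall_string r a b j) (hall_string r a b l).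

Definition mi_le (n : nat) (al be : 'I_n -> nat) : bool := [forall i, (al i <= be i)%N].
Definition mi_fact (n : nat) (al : 'I_n -> nat) : nat := (\prod_(i < n) (al i)`!)%N.
Definition mi_sub (n : nat) (al be : 'I_n -> nat) : 'I_n -> nat := fun i => (al i - be i)%N.
Definition mi_add (n : nat) (al be : 'I_n -> nat) : 'I_n -> nat := fun i => (al i + be i)%N.
Definition mi_unit (n : nat) (k : 'I_n) : 'I_n -> nat := fun i => (i == k : nat).

Definition brack_mi (n : nat) (L : Type) (br : L -> L -> L) (Y : L)
  (X : 'I_n -> L) (al : 'I_n -> nat) : L :=
  foldl br Y (flatten [seq nseq (al i) (X i) | i <- enum 'I_n]).

(* Main.v *)
Require Import Defs.
From HB Require Import structures.
From mathcomp Require Import all_boot all_order all_algebra.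
From mathcomp Require Import reals.
From mathcomp Require Import zify.
Import Order.TTheory GRing.Theory Num.Theory.
Set Implicit Arguments. Unset Strict Implicit. Unset Printing Implicit Defensive.

Section Lie.
Local Open Scope ring_scope.
Variables (R : pzRingType) (L : lmodType R) (br : L -> L -> L).
Hypothesis Hbr : lie_bracket br.

Lemma br0l z : br 0 z = 0.
Proof.
case: Hbr => H1 _ _ _; have := H1 1 0 0 z; rewrite !scale1r addr0 => H.
have := congr1 (fun v => v - br 0 z) H; rewrite /= subrr addrK => <-. by []. 
Qed.
Lemma br0r z : br z 0 = 0.
Proof.
case: Hbr => _ H1 _ _; have := H1 1 z 0 0; rewrite !scale1r addr0 => H.
by have := congr1 (fun v => v - br z 0) H; rewrite subrr addrK.
Qed.
Lemma brDl x y z : br (x + y) z = br x z + br y z.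
Proof. by case: Hbr => H1 _ _ _; have := H1 1 x y z; rewrite !scale1r. Qed.
Lemma brDr x y z : br z (x + y) = br z x + br z y.
Proof. by case: Hbr => _ H1 _ _; have := H1 1 z x y; rewrite !scale1r. Qed.
Lemma brZl c x z : br (c *: x) z = c *: br x z.
Proof. by case: Hbr => H1 _ _ _; have := H1 c x 0 z; rewrite !addr0 br0l addr0. Qed.
Lemma brZr c x z : br z (c *: x) = c *: br z x.
Proof. by case: Hbr => _ H1 _ _; have := H1 c z x 0; rewrite !addr0 br0r addr0. Qed.
Lemma brNl x z : br (- x) z = - br x z.
Proof. by rewrite -scaleN1r brZl scaleN1r. Qed.
Lemma brNr x z : br z (- x) = - br z x.
Proof. by rewrite -scaleN1r brZr scaleN1r. Qed.
Lemma brBl x y z : br (x - y) z = br x z - br y z.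
Proof. by rewrite brDl brNl. Qed.
Lemma br_anti x y : br x y = - br y x.
Proof.
case: Hbr => _ _ H0 _; have := H0 (x + y).
rewrite brDl !brDr !H0 add0r addr0 => /eqP; rewrite addr_eq0 => /eqP ->.
done.

Qed.
Lemma br_jac x y z : br x (br y z) = br (br x y) z - br (br x z) y.
Proof.
case: Hbr => _ _ _ J; have := J x y z.
rewrite (br_anti z x) brNr (br_anti y (br x z)) opprK (br_anti z (br x y)).
move=> H; apply/eqP; rewrite -subr_eq0 -H; apply/eqP.
by rewrite opprB addrA.
Qed.

Lemma foldl_br0 zs : foldl br 0 zs = 0.
Proof. by elim: zs => //= z zs IH; rewrite br0l. Qed.
Lemma foldl_brB x y zs : foldl br (x - y) zs = foldl br x zs - foldl br y zs.
Proof. by elim: zs x y => //= z zs IH x y; rewrite brBl IH. Qed.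

Definition Ann (k : nat) (x : L) := forall zs, (k <= size zs)%N -> foldl br x zs = 0.
Definition Tdeg (d : nat) (y : L) := forall k x, Ann (k + d) x -> Ann k (br x y).

Lemma Ann_mono k k' x : (k <= k')%N -> Ann k x -> Ann k' x.
Proof. by move=> hk H zs hz; apply: H; apply: leq_trans hz. Qed.
Lemma Ann0 x : Ann 0 x -> x = 0.
Proof. by move=> H; exact: (H [::]). Qed.
Lemma AnnB k x y : Ann k x -> Ann k y -> Ann k (x - y).
Proof. by move=> Hx Hy zs hz; rewrite foldl_brB Hx // Hy // subr0. Qed.
Lemma Ann_nil s x : nilpotent_step br s -> Ann s x.
Proof.
move=> Hn zs hz; rewrite -(cat_take_drop s zs) foldl_cat (Hn _ (take s zs)) ?foldl_br0 //.
exact: size_takel.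
Qed.
Lemma Tdeg1 y : Tdeg 1 y.
Proof. by move=> k x H zs hz /=; apply: (H (y :: zs)) => /=; rewrite addn1. Qed.
Lemma TdegM d1 d2 y1 y2 : Tdeg d1 y1 -> Tdeg d2 y2 -> Tdeg (d1 + d2) (br y1 y2).
Proof.
move=> T1 T2 k x H; rewrite br_jac; apply: AnnB.
  by apply: T2; apply: T1; rewrite -addnA (addnC d2).
by apply: T1; apply: T2; rewrite -addnA.
Qed.
End Lie.

Section Hall.
Variables (r s n : nat) (deg : 'I_n -> nat) (a b : 'I_n -> 'I_n).
Hypothesis Hh : is_hall r s deg a b.
Hypothesis Hr0 : (0 < r)%N.

Lemma deg_pos (l : 'I_n) : (0 < deg l)%N.
Proof.
case: Hh => [[_ H1 _] [Hm _ _ _]].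
have h0 : (0 < n)%N by apply: leq_ltn_trans (ltn_ord l).
have := Hm (Ordinal h0) l (leq0n _); rewrite H1 //.
Qed.

Lemma b_lt_a (l : 'I_n) : (r <= l)%N -> (b l < a l)%N.
Proof. by case: Hh => [[_ _ H] _] /H []. Qed.

Lemma a_lt (l : 'I_n) : (r <= l)%N -> (a l < l)%N.
Proof.
move=> hl; case: Hh => [[_ _ H] [Hm _ _ _]]; case: (H l hl) => _ hd _.
rewrite ltnNge; apply/negP => /Hm; rewrite hd -{2}(addn0 (deg (a l))) leq_add2l.
by rewrite leqNgt deg_pos.
Qed.

Lemma b_lt (l : 'I_n) : (r <= l)%N -> (b l < l)%N.
Proof. by move=> hl; exact: (ltn_trans (b_lt_a hl) (a_lt hl)). Qed.

Lemma hsf_stable f1 f2 (l : 'I_n) : (l < f1)%N -> (l < f2)%N ->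
  hall_string_fuel r a b f1 l = hall_string_fuel r a b f2 l.
Proof.
elim: f1 f2 l => [//|k IH] [//|k'] l h1 h2 /=.
case: ifP => // hl; have hl' : (r <= l)%N by rewrite leqNgt hl.
by congr rcons; apply: IH; [exact: leq_trans (a_lt hl') h1|exact: leq_trans (a_lt hl') h2].
Qed.

Lemma hsf_unfold f (l : 'I_n) : (l < f)%N -> hall_string_fuel r a b f l =
  if (l < r)%N then [:: l] else rcons (hall_string_fuel r a b f (a l)) (b l).
Proof.
case: f => [//|k] hf.
have -> : hall_string_fuel r a b k.+1 l = if (l < r)%N then [:: l]
   else rcons (hall_string_fuel r a b k (a l)) (b l) by [].
case: ifP => // hl; have hl' : (r <= l)%N by rewrite leqNgt hl.
congr rcons; apply: hsf_stable; first exact: leq_trans (a_lt hl') hf.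
exact: ltn_trans (a_lt hl') hf.
Qed.

Lemma hs_eq (l : 'I_n) : hall_string r a b l =
  if (l < r)%N then [:: l] else rcons (hall_string r a b (a l)) (b l).
Proof. exact: hsf_unfold. Qed.

Definition hd (l : 'I_n) := head l (hall_string r a b l).
Local Notation I := (hall_I r a b).

Lemma hd_gen (l : 'I_n) : (l < r)%N -> hd l = l.
Proof. by move=> hl; rewrite /hd hs_eq hl. Qed.

Lemma hs_cons (l : 'I_n) : exists y s', hall_string r a b l = y :: s'.
Proof.
rewrite hs_eq; case: ifP => _; first by exists l, [::].
by case: (hall_string r a b (a l)) => [|y s'] /=; [exists (b l), [::] | exists y, (rcons s' (b l))].
Qed.

Lemma hd_comp (l : 'I_n) : (r <= l)%N -> hd l = hd (a l).
Proof.
move=> hl; rewrite /hd (hs_eq l) ltnNge hl /=.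
by case: (hs_cons (a l)) => y [s' ->].
Qed.

Lemma prec_hd (q l : 'I_n) : (q < r)%N -> hall_prec r a b q l = (hd l == q).
Proof.
move=> hq; rewrite /hall_prec /hd (hs_eq q) hq.
case: (hs_cons l) => y [s' ->] /=.
by case: s' => [|? ?]; rewrite andbT eq_sym.
Qed.

Lemma I_gen (l : 'I_n) j : (l < r)%N -> I l j = 0%N.
Proof. by move=> hl; rewrite /hall_I hs_eq hl. Qed.

Lemma I_comp (l : 'I_n) j : (r <= l)%N -> I l j = (I (a l) j + (b l == j))%N.
Proof.
move=> hl; rewrite /hall_I (hs_eq l) ltnNge hl /=.
case: (hs_cons (a l)) => y [s' ->] /=.
by rewrite -cats1 count_cat /= addn0.
Qed.

Lemma I_b (l : 'I_n) : (r <= l)%N -> (0 < I l (b l))%N.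
Proof. by move=> hl; rewrite I_comp // eqxx addn1. Qed.

Lemma I_bound (l : 'I_n) j : (r <= l)%N -> (0 < I l j)%N -> (j <= b l)%N.
Proof.
have [k] := ubnP l; elim: k l => [//|k IH] l hk hl.
rewrite I_comp //; case: (ltnP (a l) r) => ha.
  by rewrite I_gen // add0n lt0b => /eqP ->.
case: eqP => [-> //|_]; rewrite addn0 => hj.
have hb : (b (a l) <= b l)%N by case: Hh => [[_ _ H] _]; case: (H l hl) => _ _; apply.
apply: leq_trans hb; apply: IH => //.
exact: leq_trans (a_lt hl) hk.
Qed.
End Hall.

Section Brack.
Variables (L : Type) (br : L -> L -> L) (n : nat) (X : 'I_n -> L).

Lemma brack_ext Y (g1 g2 : 'I_n -> nat) : (forall k, g1 k = g2 k) ->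
  brack_mi br Y X g1 = brack_mi br Y X g2.
Proof. by move=> H; rewrite /brack_mi (@eq_map _ _ (fun i => nseq (g1 i) (X i)) (fun i => nseq (g2 i) (X i))) // => k; rewrite H. Qed.

Lemma flatten_nil (T : Type) (U : eqType) (F : U -> seq T) (s : seq U) :
  (forall k, k \in s -> F k = [::]) -> flatten [seq F k | k <- s] = [::].
Proof.
elim: s => [//|k s IH] H /=; rewrite H ?mem_head // IH // => y hy.
by apply: H; rewrite inE hy orbT.
Qed.

Lemma brack_zero Y : brack_mi br Y X (fun _ => 0%N) = Y.
Proof. by rewrite /brack_mi flatten_nil. Qed.

Lemma sorted_enum_ord : sorted (fun x y : 'I_n => (x < y)%N) (enum 'I_n).
Proof. by have := iota_ltn_sorted 0 n; rewrite -val_enum_ord sorted_map. Qed.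

Lemma flat_push (s : seq 'I_n) (g : 'I_n -> nat) m :
  sorted (fun x y : 'I_n => (x < y)%N) s -> m \in s ->
  (forall k : 'I_n, (m < k)%N -> g k = 0%N) ->
  flatten [seq nseq (g k + (k == m)) (X k) | k <- s] =
  rcons (flatten [seq nseq (g k) (X k) | k <- s]) (X m).
Proof.
elim: s => [//|k s IH] hs hm hg /=.
have hall : all (fun y : 'I_n => (k < y)%N) s.
  by apply: order_path_min hs => x y z; apply: ltn_trans.
have hs' : sorted (fun x y : 'I_n => (x < y)%N) s by apply: path_sorted hs.
case: (eqVneq k m) => [ekm|nkm]; last first.
  rewrite (_ : (g k + false)%N = g k) ?addn0 // rcons_cat IH //.
  by move: hm; rewrite inE eq_sym (negbTE nkm).
subst k; rewrite addn1 !flatten_nil ?cats0; first by elim: (g m) => //= j ->.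
all: move=> k hk; have hk' := allP hall k hk; rewrite hg //.
  have -> // : (k == m) = false.
  by apply/negbTE; rewrite neq_ltn hk' orbT.
Qed.
End Brack.

Lemma brack_push (L : Type) (br : L -> L -> L) (n : nat) (X : 'I_n -> L) Y g (m : 'I_n) :
  (forall k : 'I_n, (m < k)%N -> g k = 0%N) ->
  brack_mi br Y X (fun k => (g k + (k == m))%N) = br (brack_mi br Y X g) (X m).
Proof.
by move=> hg; rewrite /brack_mi flat_push ?sorted_enum_ord ?mem_enum // -cats1 foldl_cat.
Qed.

Section Main.
Variables (R : realType) (L : lmodType R) (br : L -> L -> L).
Variables (r s n : nat) (deg : 'I_n -> nat) (a b : 'I_n -> 'I_n) (X : 'I_n -> L).
Hypothesis Hbr : lie_bracket br.
Hypothesis Hnil : nilpotent_step br s.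
Hypothesis Hh : is_hall r s deg a b.
Hypothesis Hr0 : (0 < r)%N.
Hypothesis hX : forall l : 'I_n, (r <= l)%N -> X l = br (X (a l)) (X (b l)).

Lemma X_T (l : 'I_n) : Tdeg br (deg l) (X l).
Proof.
have [k] := ubnP l; elim: k l => [//|k IH] l hk.
case: (ltnP l r) => hl.
  by case: Hh => [[_ H1 _] _]; rewrite H1 //; apply: Tdeg1.
rewrite hX //; case: Hh => [[_ _ H] _]; case: (H l hl) => _ -> _.
apply: TdegM => //; apply: IH.
  exact: leq_trans (a_lt Hh Hr0 hl) hk.
exact: leq_trans (b_lt Hh Hr0 hl) hk.
Qed.

Lemma X_Ann (l : 'I_n) : Ann br (s.+1 - deg l) (X l).
Proof.
have [k] := ubnP l; elim: k l => [//|k IH] l hk.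
case: (ltnP l r) => hl.
  by case: Hh => [[_ H1 _] _]; rewrite H1 // subSS subn0; apply: Ann_nil.
rewrite hX //; case: Hh => [[_ _ H] [_ Hs _ _]]; case: (H l hl) => _ hd _.
apply: (@X_T (b l) (s.+1 - deg l) (X (a l))).
have hs := Hs l.
have -> : (s.+1 - deg l + deg (b l) = s.+1 - deg (a l))%N by rewrite hd; lia.
by apply: IH; exact: leq_trans (a_lt Hh Hr0 hl) hk.
Qed.


Lemma X_vanish (l m : 'I_n) : (s < deg l + deg m)%N -> br (X l) (X m) = 0%R.
Proof.
move=> hs; apply: Ann0; apply: (@X_T m 0 (X l)); rewrite add0n.
apply: (Ann_mono _ (@X_Ann l)); by rewrite leq_subLR.
Qed.

Variables (i q : 'I_n).
Hypothesis hq : (q < r)%N.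

Local Notation I := (hall_I r a b).
Let hd_gen' := hd_gen Hh Hr0.
Let I_gen' := I_gen Hh Hr0.
Let I_comp' := I_comp Hh Hr0.
Let I_b' := I_b Hh Hr0.
Let I_bound' := I_bound Hh Hr0.
Let hd_comp' := hd_comp Hh Hr0.
Let a_lt' := a_lt Hh Hr0.
Let prec_hd' := prec_hd Hh Hr0.
Definition cn (be J : 'I_n -> nat) : nat := (\prod_(k < n) 'C(be k, J k))%N.
Definition Pq (be : 'I_n -> nat) (l : 'I_n) := (hd r a b l == q) && mi_le (I l) be.
Definition bm (g : 'I_n -> nat) := brack_mi br (X i) X g.
Definition tm (be : 'I_n -> nat) (l : 'I_n) : L :=
  ((cn be (I l))%:R : R) *: bm (fun k => be k - I l k + (k == l))%N.
Definition F be := (\sum_(l < n | Pq be l) tm be l)%R.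

Lemma mi_leP (J be : 'I_n -> nat) : reflect (forall k, J k <= be k)%N (mi_le J be).
Proof. exact: forallP. Qed.

Lemma I_nz (l : 'I_n) : (forall k, I l k = 0%N) -> (l < r)%N.
Proof.
move=> H; rewrite ltnNge; apply/negP => hl.
by have := I_b' hl; rewrite H.
Qed.

Lemma base be : (forall k, be k = 0%N) -> brack_mi br (br (X i) (X q)) X be = F be.
Proof.
move=> hz; rewrite (@brack_ext _ _ _ _ _ _ (fun _ => 0%N)) // brack_zero.
have Pqq : Pq be q.
  by rewrite /Pq hd_gen' // eqxx /=; apply/mi_leP => k; rewrite I_gen'.
rewrite /F (bigD1 q) //= big1 ?addr0.
  rewrite /tm /cn big1 ?scale1r; last by move=> k _; rewrite hz I_gen' ?bin0.
  rewrite /bm (@brack_ext _ _ _ _ _ _ (fun k => (0 + (k == q))%N)); last by move=> k; rewrite hz I_gen'.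
  by rewrite brack_push // brack_zero.
move=> l /andP[/andP[/eqP hdl /mi_leP hle] nlq].
have hI : forall k, I l k = 0%N by move=> k; apply/eqP; rewrite -leqn0 -(hz k).
have hl := I_nz hI.
by move: nlq; rewrite -hdl hd_gen' // eqxx.
Qed.

Section Step.
Variables (be : 'I_n -> nat) (m : 'I_n).
Hypothesis hm0 : (0 < be m)%N.
Hypothesis hbnd : forall k : 'I_n, (m < k)%N -> be k = 0%N.
Let be' := fun k : 'I_n => (be k - (k == m))%N.
Lemma hbe (k : 'I_n) : be k = (be' k + (k == m))%N.
Proof. by rewrite /be'; case: eqP => [->|_]; rewrite ?subn0 ?addn0 ?subnK. Qed.
Lemma bnd' (k : 'I_n) : (m < k)%N -> be' k = 0%N.
Proof. by move=> h; rewrite /be' hbnd. Qed.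

Definition cm (J : 'I_n -> nat) : nat :=
  if (0 < J m)%N then ('C(be' m, (J m).-1) * \prod_(k < n | k != m) 'C(be' k, J k))%N else 0%N.

Lemma coef_split J : cn be J = (cn be' J + cm J)%N.
Proof.
rewrite /cn /cm (bigD1 m) //= [X in (_ = X + _)%N](bigD1 m) //=.
have -> : (\prod_(k < n | k != m) 'C(be k, J k) = \prod_(k < n | k != m) 'C(be' k, J k))%N.
  by apply: eq_bigr => k hk; rewrite hbe (negbTE hk) addn0.
rewrite hbe eqxx addn1; case: (J m) => [|j] /=; first by rewrite !bin0 addn0.
by rewrite binS mulnDl.
Qed.

Lemma cn_zero J : ~~ mi_le J be' -> cn be' J = 0%N.
Proof.
case/forallPn => k; rewrite -ltnNge => hk.
by rewrite /cn (bigD1 k) //= bin_small.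
Qed.

Lemma term_split (l : 'I_n) : mi_le (I l) be' ->
  br (bm (fun k => be' k - I l k + (k == l))%N) (X m) =
  (bm (fun k => be k - I l k + (k == l))%N +
   (if (m < l)%N then br (bm (fun k => be' k - I l k)%N) (br (X l) (X m)) else 0))%R.
Proof.
move=> /mi_leP hle.
have bg : forall k : 'I_n, (m < k)%N -> (be' k - I l k = 0)%N by move=> k hk; rewrite bnd'.
case: ltnP => hml.
- rewrite /bm brack_push; last by move=> k hk; apply: bg; exact: ltn_trans hk.
  have -> : brack_mi br (X i) X (fun k => (be k - I l k + (k == l))%N) =
    br (br (brack_mi br (X i) X (fun k => (be' k - I l k)%N)) (X m)) (X l).
    rewrite -brack_push // -brack_push.
      apply: brack_ext => k; have := hbe k; have := hle k.
      by case: (k == m); case: (k == l) => /=; lia.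
    move=> k hk; rewrite bg; last by exact: ltn_trans hk.
    by rewrite (_ : (k == m) = false) //; apply/negbTE; rewrite neq_ltn (ltn_trans hml hk) orbT.
  by rewrite (br_jac Hbr) addrC subrK.
- rewrite /bm -brack_push ?addr0.
    apply: brack_ext => k; have := hbe k; have := hle k.
    by case: (k == m); case: (k == l) => /=; lia.
  move=> k hk; rewrite bg //.
  by rewrite (_ : (k == l) = false) //; apply/negbTE; rewrite neq_ltn (leq_ltn_trans hml hk) orbT.
Qed.

Lemma D_sum (l : 'I_n) : mi_le (I l) be' -> (m < l)%N ->
  br (bm (fun k => be' k - I l k)%N) (br (X l) (X m)) =
  (\sum_(l' < n | (r <= l')%N && (a l' == l) && (b l' == m))
      bm (fun k => be k - I l' k + (k == l'))%N)%R.
Proof.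
move=> /mi_leP hle hml.
case: (boolP [exists l' : 'I_n, (r <= l')%N && (a l' == l) && (b l' == m)]).
- case/existsP => l0 /andP[/andP[hr0 /eqP ha] /eqP hb].
  rewrite (bigD1 l0) ?hr0 ?ha ?hb ?eqxx //= big1 ?addr0.
    have hl0 : (l < l0)%N by rewrite -ha; apply: a_lt'.
    rewrite -ha -hb -hX // /bm -brack_push.
      apply: brack_ext => k; rewrite (@I_comp' l0 k hr0) ha hb; have := hbe k; have := hle k.
      by rewrite (eq_sym m k); case: (k == m); case: (k == l0) => /=; lia.
    move=> k hk; rewrite bnd' //; apply: ltn_trans hml (ltn_trans hl0 hk).
  move=> l' /andP[/andP[/andP[hr' /eqP ha'] /eqP hb'] hne].
  case: Hh => _ [_ _ Hu _]; have := Hu l' l0 hr' hr0; rewrite ha' ha hb' hb => /(_ erefl erefl) e.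
  by rewrite e eqxx in hne.
- move=> hne; rewrite big_pred0; last first.
    by move=> l'; apply/negbTE; move: hne; rewrite negb_exists => /forallP.
  rewrite X_vanish ?(br0r Hbr) //.
  rewrite ltnNge; apply/negP => hdeg; apply: (negP hne).
  case: Hh => _ [_ _ _ Hex]; case: (Hex l m hml hdeg).
    move=> hrl; have := I_b' hrl; have := hle (b l); rewrite leqNgt => hb1 hb2.
    case: (ltnP m (b l)) => // hmb.
    by move: hb1; rewrite bnd' // (leq_trans hb2).
  by move=> l' [h1 h2 h3]; apply/existsP; exists l'; rewrite h1 h2 h3 !eqxx.
Qed.

Lemma cm_comp (l' : 'I_n) : (r <= l')%N -> b l' = m -> cm (I l') = cn be' (I (a l')).
Proof.
move=> hr' hb'; rewrite /cm (@I_comp' l' m hr') hb' eqxx addn1 /= /cn [RHS](bigD1 m) //=.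
congr (_ * _)%N; apply: eq_bigr => k hk.
rewrite (@I_comp' l' k hr') hb'; case: eqP => [e|_]; last by rewrite addn0.
by rewrite e eqxx in hk.
Qed.

Lemma cm_zero (l' : 'I_n) : mi_le (I l') be -> ~~ ((r <= l')%N && (b l' == m)) ->
  cm (I l') = 0%N.
Proof.
move=> /mi_leP hle hc; rewrite /cm; case: ifP => // hpos; exfalso.
case: (ltnP l' r) => hr'; first by move: hpos; rewrite I_gen'.
have h1 := I_bound' hr' hpos.
have h2 : (b l' <= m)%N.
  rewrite leqNgt; apply/negP => hmb; have := leq_trans (I_b' hr') (hle (b l')).
  by rewrite hbnd.
have e : b l' = m by apply: val_inj; apply/eqP; rewrite eqn_leq h1 h2.
by move: hc; rewrite hr' e eqxx.
Qed.

Lemma Pq_comp (l' : 'I_n) : (r <= l')%N -> b l' = m -> Pq be l' = Pq be' (a l').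
Proof.
move=> hr' hb'; rewrite /Pq hd_comp' //; congr andb.
apply/mi_leP/mi_leP => H k; have := H k; rewrite (@I_comp' l' k hr') hb';
  have := hbe k; rewrite (eq_sym m k); case: (k == m) => /=; lia.
Qed.

Lemma Pq_mono (l : 'I_n) : Pq be' l -> Pq be l.
Proof.
rewrite /Pq; case/andP => -> /mi_leP H; apply/mi_leP => k; apply: leq_trans (H k) _.
by rewrite /be' leq_subr.
Qed.

Lemma Pq_diff (l : 'I_n) : Pq be l -> ~~ Pq be' l -> ~~ mi_le (I l) be'.
Proof. by rewrite /Pq; case/andP => -> _. Qed.

Lemma step : brack_mi br (br (X i) (X q)) X be' = F be' ->
  brack_mi br (br (X i) (X q)) X be = F be.
Proof.
move=> IH.
have -> : brack_mi br (br (X i) (X q)) X be = br (brack_mi br (br (X i) (X q)) X be') (X m).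
  rewrite -brack_push; [apply: brack_ext => k; exact: hbe | exact: bnd'].
rewrite IH /F (big_morph (fun v => br v (X m)) (fun x y => brDl Hbr x y (X m)) (br0l Hbr (X m))).
pose E (l : 'I_n) := bm (fun k => be k - I l k + (k == l))%N.
pose c (l : 'I_n) := ((cn be' (I l))%:R)%R : R.
pose D (l : 'I_n) := br (bm (fun k => be' k - I l k)%N) (br (X l) (X m)).
rewrite (eq_bigr (fun l => c l *: E l + c l *: (if (m < l)%N then D l else 0))%R); last first.
  by move=> l hl; rewrite /tm (brZl Hbr) term_split ?scalerDr //; case/andP: hl.
rewrite big_split /=.
rewrite [RHS](eq_bigr (fun l => c l *: E l + ((cm (I l))%:R : R)%R *: E l)%R); last first.
  by move=> l _; rewrite /tm coef_split natrD scalerDl.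
rewrite [RHS]big_split /=; congr (_ + _)%R.
  rewrite [RHS]big_mkcond [LHS]big_mkcond; apply: eq_bigr => l _.
  case: (boolP (Pq be' l)) => h'; first by rewrite (Pq_mono h').
  case: (boolP (Pq be l)) => // h.
  by rewrite /c cn_zero ?scale0r // (Pq_diff h h').
transitivity (\sum_(l' < n) (if (r <= l')%N && (b l' == m) && Pq be' (a l')
                             then c (a l') *: E l' else 0))%R.
  rewrite big_mkcond.
  rewrite (eq_bigr (fun l => \sum_(l' < n) (if Pq be' l && (m < l)%N &&
      ((r <= l')%N && (a l' == l) && (b l' == m)) then c l *: E l' else 0))%R); last first.
    move=> l _; case: (boolP (Pq be' l)) => hP /=; last by rewrite big1.
    case: ltnP => hml /=; last by rewrite scaler0 big1.
    rewrite /D D_sum ?(andP hP).2 // scaler_sumr big_mkcond; apply: eq_bigr => l' _.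
    by case: ifP.
  rewrite exchange_big; apply: eq_bigr => l' _.
  case: (boolP ((r <= l')%N && (b l' == m))) => hc /=.
    case/andP: hc => hr' /eqP hb'; rewrite (bigD1 (a l')) //= big1 ?addr0.
      have hma : (m < a l')%N by rewrite -hb'; apply: (b_lt_a Hh hr').
      by rewrite hma hr' hb' !eqxx /= !andbT.
    move=> l hl; rewrite (_ : (a l' == l) = false); last by rewrite eq_sym (negbTE hl).
    by rewrite /= ?andbF ?andFb.
  apply: big1 => l _; case: ifP => // /andP[_ /andP[/andP[h1 _] h3]].
  by rewrite h1 h3 in hc.
rewrite [RHS]big_mkcond; apply: eq_bigr => l' _.
case: (boolP ((r <= l')%N && (b l' == m))) => hc /=.
  case/andP: hc => hr' /eqP hb'; rewrite Pq_comp // cm_comp //.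
case: ifP => // hP; rewrite cm_zero ?scale0r //; by case/andP: hP.
Qed.
End Step.

Lemma claim N : forall be, (\sum_(k < n) be k)%N = N ->
  brack_mi br (br (X i) (X q)) X be = F be.
Proof.
elim: N => [|N IH] be hs.
  apply: base => k; move: hs; rewrite (bigD1 k) //= => /eqP; rewrite addn_eq0.
  by case/andP => /eqP.
case: (pickP (fun k => (0 < be k)%N)) => [k0 hk0|hnone]; last first.
  by move: hs; rewrite big1 // => k _; move: (hnone k) => /= /negbT; rewrite lt0n negbK => /eqP.
case: (@arg_maxnP _ k0 (fun k => (0 < be k)%N) (fun k : 'I_n => (k : nat)) hk0) => m hm hmax.
have hbnd : forall k : 'I_n, (m < k)%N -> be k = 0%N.
  move=> k hk; case: (posnP (be k)) => // h.
  have hk2 : (k <= m)%N := hmax k h.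
  by move: hk; rewrite ltnNge hk2.
apply: (step hm hbnd); apply: IH.
move: hs; rewrite (bigD1 m) //= => hs.
rewrite (bigD1 m) //= eqxx.
have -> : (\sum_(k < n | k != m) (be k - (k == m)) = \sum_(k < n | k != m) be k)%N.
  by apply: eq_bigr => k hk; rewrite (negbTE hk) subn0.
have -> : (be m - true = be m - 1)%N by []. 
have hm' : (0 < be m)%N := hm.
case: (be m) hm' hs => [//|v] _ hs.
by move: hs; rewrite subSS subn0 addSn => -[].
Qed.
End Main.
Unset Implicit Arguments.
Local Open Scope ring_scope.

Lemma fact_split n (be J : 'I_n -> nat) : mi_le J be ->
  mi_fact be = (cn be J * (mi_fact (mi_sub be J) * mi_fact J))%N.
Proof.
move/forallP => H; rewrite /mi_fact /cn /mi_sub -!big_split /=.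
by apply: eq_bigr => k _; rewrite (mulnC (_`!) (_`!)) bin_fact //; apply: H.
Qed.

Theorem lemma3p2 (R : realType) (r s n : nat) (L : lmodType R)
  (br : L -> L -> L) (Y : 'I_r -> L)
  (deg : 'I_n -> nat) (a b : 'I_n -> 'I_n) (X : 'I_n -> L) :
  (2 <= r)%N -> (2 <= s)%N ->
  free_nilpotent s br Y ->
  is_hall r s deg a b ->
  (forall (l : 'I_n) (Hl : (l < r)%N), X l = Y (Ordinal Hl)) ->
  (forall l : 'I_n, (r <= l)%N -> X l = br (X (a l)) (X (b l))) ->
  forall (be : 'I_n -> nat) (i q : 'I_n), (q < r)%N ->
    brack_mi br (br (X i) (X q)) X be =
    \sum_(l < n | hall_prec r a b q l && mi_le (hall_I r a b l) be)
      (((mi_fact be)%:R / ((mi_fact (mi_sub be (hall_I r a b l)))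
                            * mi_fact (hall_I r a b l))%:R) : R)
      *: brack_mi br (X i) X
           (mi_add (mi_sub be (hall_I r a b l)) (mi_unit l)).
Proof.
move=> h2r _ [Hbr Hnil _] Hh _ hX be i q hq.
have Hr0 : (0 < r)%N by apply: leq_trans h2r.
rewrite (claim Hbr Hnil Hh Hr0 hX i hq (erefl _)) /F.
apply: eq_big => [l|l /andP[_ hle]]; first by rewrite /Pq (prec_hd Hh Hr0).
rewrite /tm (@fact_split _ _ _ hle) natrM mulfK; last first.
  by rewrite pnatr_eq0 -lt0n muln_gt0 !prodn_gt0 // => k; apply: fact_gt0.
congr (_ *: _); exact: brack_ext.
Qed.
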